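(* Assume the standing setup below. Let $x\in X$ and let $1\le i\le j\le k$ be such that $(s_i,[x]_{s_i,X})\to(s_j,[x]_{s_j,X})$ is a layer of $X$. Suppose that either $y\in[x]_{s_i,Y}$ or $y\notin[x]_{s_j,Y}$. Then $[x]_{s_i,Y}=[x]_{s_j,Y}$ (so this edge is a partial layer for $Y$), and for any phase change numbers $s\le s_i$ and $t\ge s_j$ of $Y$ with $[x]_{s,Y}=[x]_{t,Y}$ (in particular for the layer $(s,[x]_{s,Y})\to(t,[x]_{t,Y})$ of $Y$ containing this edge) one has $s_{i-1}<s\le s_i$ and $s_j\le t<s_{j+1}$.
   Context: For a finite set $Z\subset\mathbb{R}^n$ and a real number $s\ge 0$, the Vietoris–Rips complex $V_s(Z)$ is the simplicial complex with vertex set $Z$ whose simplices are the nonempty subsets $\sigma\subseteq Z$ with $d(z,z')\le s$ for all $z,z'\in\sigma$ ($d$ the Euclidean distance). For $z\in Z$, $[z]_{s,Z}\subseteq Z$ denotes the set of vertices of the path component of $V_s(Z)$ containing $z$; for $s\le t$, $[z]_{s,Z}\subseteq[z]_{t,Z}$. The phase change numbers of $Z$ are the distinct values of $d(z,z')$, $z,z'\in Z$. A partial layer for $Z$ is an edge $(s,[z]_{s,Z})\to(t,[z]_{t,Z})$ with $s\le t$ and $[z]_{s,Z}=[z]_{t,Z}$ as subsets of $Z$. A layer of $Z$ is a partial layer $(s,[z]_{s,Z})\to(t,[z]_{t,Z})$ such that $s,t$ are phase change numbers of $Z$ and which is maximal: there are no phase change numbers $s'\le s$, $t'\ge t$ of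 $Z$ with $(s',t')\ne(s,t)$ and $[z]_{s',Z}=[z]_{t',Z}$. Standing setup: $X\subset\mathbb{R}^n$ is a finite set with at least two points, $y\in\mathbb{R}^n\setminus X$, $Y=X\sqcup\{y\}$. The phase change numbers of $X$ are $0=s_0<s_1<\dots<s_k$; set $s_{k+1}=+\infty$. There are $x_0\in X$ and a real $r>0$ with $d(y,x_0)<r$ and $r<s_{i+1}-s_i$ for all $0\le i<k$. *)

(* Defs.v *)
(* points of R^n are lists of reals of length n. *)
From Stdlib Require Import Reals List Lra.
Import ListNotations.
Open Scope R_scope.

Definition sqdist (a b : list R) : R :=
  fold_right Rplus 0 (map (fun p => (fst p - snd p) ^ 2) (combine a b)).
Definition edist (a b : list R) : R := sqrt (sqdist a b).

Definition in_Rn (n : nat) (Z : list (list R)) : Prop :=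
  Forall (fun p => length p = n) Z.

(* z and w lie in the same path component of the Vietoris-Rips complex V_s(Z):
   they are joined by a chain of vertices of Z with consecutive distances <= s
   (path components of V_s(Z) are those of its 1-skeleton). *)
Inductive conn (s : R) (Z : list (list R)) (z : list R) : list R -> Prop :=
| conn_refl : In z Z -> conn s Z z z
| conn_step : forall w w', conn s Z z w -> In w' Z -> edist w w' <= s ->
    conn s Z z w'.

Definition comp_eq (Z : list (list R)) (z : list R) (s t : R) : Prop :=
  forall w, In w Z -> (conn s Z z w <-> conn t Z z w).

Definition is_pcn (Z : list (list R)) (s : R) : Prop :=
  exists z z', In z Z /\ In z' Z /\ edist z z' = s.

Definition partial_layer (Z : list (list R)) (z : list R) (s t : R) : Prop :=
  s <= t /\ comp_eq Z z s t.

Definition is_layer (Z : list (list R)) (z : list R) (s t : R) : Prop :=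
  partial_layer Z z s t /\ is_pcn Z s /\ is_pcn Z t /\
  ~ (exists s' t', is_pcn Z s' /\ is_pcn Z t' /\ s' <= s /\ t <= t' /\
                   (s', t') <> (s, t) /\ comp_eq Z z s' t').

(* Main.v *)
Require Import Defs.
From Stdlib Require Import Reals List Lra Lia Classical Arith.
Import ListNotations.
Open Scope R_scope.

Lemma sqdist_cons a0 a b0 b : sqdist (a0::a) (b0::b) = (a0-b0)^2 + sqdist a b.
Proof. reflexivity. Qed.

Lemma sqdist_nonneg a b : 0 <= sqdist a b.
Proof. unfold sqdist. generalize (combine a b). induction l; simpl. lra.
  pose proof (pow2_ge_0 (fst a0 - snd a0)). simpl in *. nra. Qed.

Lemma sqdist_sym a b : sqdist a b = sqdist b a.
Proof. revert b; induction a; destruct b; try reflexivity.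
  rewrite !sqdist_cons, IHa. f_equal. ring. Qed.

Lemma edist_sym a b : edist a b = edist b a.
Proof. unfold edist; now rewrite sqdist_sym. Qed.

Lemma minkowski2 (D E p q c : R) : 0<=p -> 0<=q -> 0<=c -> c <= (p+q)^2 ->
  sqrt((D+E)^2 + c) <= sqrt(D^2+p^2) + sqrt(E^2+q^2).
Proof.
  intros Hp Hq Hc Hcpq.
  set (U := sqrt(D^2+p^2)). set (V := sqrt(E^2+q^2)).
  assert (HU: U*U = D^2+p^2) by (apply sqrt_sqrt; nra).
  assert (HV: V*V = E^2+q^2) by (apply sqrt_sqrt; nra).
  assert (U0: 0 <= U) by apply sqrt_pos.
  assert (V0: 0 <= V) by apply sqrt_pos.
  assert (HUV: (U*V)*(U*V) = (D^2+p^2)*(E^2+q^2)) by (rewrite <- HU, <- HV; ring).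
  assert (key: D*E + p*q <= U*V).
  { assert (0 <= U*V) by nra.
    destruct (Rle_dec (D*E+p*q) 0). lra.
    apply Rnot_lt_le; intro Hlt.
    assert ((U*V)*(U*V) < (D*E+p*q)*(D*E+p*q)) by nra.
    pose proof (pow2_ge_0 (D*q - E*p)). nra. }
  rewrite <- (sqrt_pow2 (U+V)) by lra.
  apply sqrt_le_1_alt. nra.
Qed.

Lemma tri a b c : length a = length b -> length b = length c ->
  edist a c <= edist a b + edist b c.
Proof.
  revert b c; induction a as [|a0 a IH]; intros [|b0 b] [|c0 c]; simpl; intros H1 H2;
    try discriminate.
  - unfold edist, sqdist; simpl. rewrite sqrt_0. lra.
  - injection H1; injection H2; intros E2 E1.
    specialize (IH b c E1 E2). unfold edist in *. rewrite !sqdist_cons.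
    pose proof (sqdist_nonneg a b). pose proof (sqdist_nonneg b c).
    pose proof (sqdist_nonneg a c).
    rewrite <- (pow2_sqrt (sqdist a b)) at 1 by auto.
    rewrite <- (pow2_sqrt (sqdist b c)) at 1 by auto.
    replace (a0 - c0) with ((a0-b0)+(b0-c0)) by ring.
    apply minkowski2; try apply sqrt_pos; auto.
    rewrite <- (pow2_sqrt (sqdist a c)) by auto.
    pose proof (sqrt_pos (sqdist a c)).
    apply pow_incr; lra.
Qed.

Lemma conn_mono s t Z z w : conn s Z z w -> s <= t -> conn t Z z w.
Proof. intros H Hst; induction H. now constructor. eapply conn_step; eauto; lra. Qed.

Lemma conn_sub s Z Z' z w : incl Z Z' -> conn s Z z w -> conn s Z' z w.
Proof. intros Hi H; induction H. constructor; auto. eapply conn_step; eauto. Qed.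

Lemma conn_in s Z z w : conn s Z z w -> In z Z /\ In w Z.
Proof. intros H; induction H; tauto. Qed.

Lemma s_mono (k : nat) (s : nat -> R) :
  (forall i, (i < k)%nat -> s i < s (S i)) ->
  forall a b, (a <= b)%nat -> (b <= k)%nat -> s a <= s b.
Proof.
  intros Hs a b Hab; induction Hab; intros Hb. lra.
  pose proof (Hs m ltac:(lia)). specialize (IHHab ltac:(lia)). lra.
Qed.

Lemma close_lemma n X y k (s : nat -> R) x0 r
  (HXn : in_Rn n X) (Hyn : length y = n)
  (Hsinc : forall i, (i < k)%nat -> s i < s (S i))
  (Hpcn : forall u, is_pcn X u <-> exists i, (i <= k)%nat /\ u = s i)
  (Hx0 : In x0 X) (Hyx0 : edist y x0 < r)
  (Hrgap : forall i, (i < k)%nat -> r < s (S i) - s i)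
  m (Hm : (m <= k)%nat) u (Hu : In u X) (Hd : edist u y <= s m) :
  edist u x0 <= s m.
Proof.
  unfold in_Rn in HXn. rewrite Forall_forall in HXn.
  assert (T: edist u x0 <= edist u y + edist y x0)
    by (apply tri; rewrite ?(HXn u Hu), ?(HXn x0 Hx0), ?Hyn; auto).
  destruct (proj1 (Hpcn (edist u x0))) as [p [Hp Hep]].
  { exists u, x0; auto. }
  destruct (le_lt_dec p m).
  - pose proof (s_mono k s Hsinc p m l Hm). lra.
  - pose proof (s_mono k s Hsinc (S m) p l Hp). pose proof (Hrgap m ltac:(lia)). lra.
Qed.

Lemma L n X y k (s : nat -> R) x0 r
  (HXn : in_Rn n X) (Hyn : length y = n) (HyX : ~ In y X)
  (Hsinc : forall i, (i < k)%nat -> s i < s (S i))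
  (Hpcn : forall u, is_pcn X u <-> exists i, (i <= k)%nat /\ u = s i)
  (Hx0 : In x0 X) (Hyx0 : edist y x0 < r)
  (Hrgap : forall i, (i < k)%nat -> r < s (S i) - s i)
  m (Hm : (m <= k)%nat) x (Hx : In x X) w :
  conn (s m) (y::X) x w ->
  (In w X -> conn (s m) X x w) /\ (w = y -> conn (s m) X x x0).
Proof.
  intros H. induction H as [Hz | w w' Hc IH Hw' Hd].
  - split. intros; now constructor. intros ->; contradiction.
  - destruct IH as [IH1 IH2].
    assert (Hw : In w (y::X)) by (apply (conn_in _ _ _ _ Hc)).
    destruct Hw' as [<- | Hw'].
    + split. intro; contradiction. intros _.
      destruct Hw as [<- | Hw]. now apply IH2.
      eapply conn_step. apply IH1; auto. auto.
      eapply close_lemma; eauto.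
    + split; [intros _ | intros ->; contradiction].
      destruct Hw as [<- | Hw].
      * eapply conn_step. apply IH2; auto. auto.
        rewrite edist_sym. eapply close_lemma; eauto. now rewrite edist_sym.
      * eapply conn_step; eauto.
Qed.

Theorem proposition15
  (n : nat) (X : list (list R)) (y : list R)
  (k : nat) (s : nat -> R) (x0 : list R) (r : R)
  (* standing setup *)
  (HXn : in_Rn n X) (Hyn : length y = n)
  (HX2 : exists a b, In a X /\ In b X /\ a <> b)
  (HyX : ~ In y X)
  (Hs0 : s 0%nat = 0)
  (Hsinc : forall i, (i < k)%nat -> s i < s (S i))
  (Hpcn : forall u, is_pcn X u <-> exists i, (i <= k)%nat /\ u = s i)
  (Hx0 : In x0 X) (Hr : 0 < r) (Hyx0 : edist y x0 < r)
  (Hrgap : forall i, (i < k)%nat -> r < s (S i) - s i)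
  (* hypotheses of the proposition *)
  (x : list R) (Hx : In x X) (i j : nat)
  (Hij : (1 <= i)%nat /\ (i <= j)%nat /\ (j <= k)%nat)
  (Hlayer : is_layer X x (s i) (s j))
  (Hy : conn (s i) (y :: X) x y \/ ~ conn (s j) (y :: X) x y) :
  comp_eq (y :: X) x (s i) (s j) /\
  forall s' t', is_pcn (y :: X) s' -> is_pcn (y :: X) t' ->
    s' <= s i -> s j <= t' -> comp_eq (y :: X) x s' t' ->
    (s (i - 1)%nat < s' /\ s' <= s i) /\
    (s j <= t' /\ ((j < k)%nat -> t' < s (S j))).
Proof.
  destruct Hij as [Hi1 [Hij Hjk]].
  destruct Hlayer as [[Hsij HceX] [_ [_ Hmax]]].
  assert (HL : forall m, (m <= k)%nat -> forall w, In w X ->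
            conn (s m) (y::X) x w -> conn (s m) X x w).
  { intros m Hm w Hw Hc. exact (proj1 (L n X y k s x0 r HXn Hyn HyX Hsinc Hpcn Hx0 Hyx0 Hrgap m Hm x Hx w Hc) Hw). }
  assert (incl X (y::X)) by (intros ? ?; now right).
  assert (P1 : comp_eq (y :: X) x (s i) (s j)).
  { intros w Hw. split; intro Hc.
    - eapply conn_mono; eauto.
    - destruct Hw as [<- | Hw].
      + destruct Hy as [Hy | Hy]; [exact Hy | contradiction].
      + eapply conn_sub; eauto. apply HceX; auto. }
  split; [exact P1|].
  intros s' t' _ _ Hs' Ht' Hce.
  split; split; auto.
  - apply Rnot_le_lt; intro Hle.
    assert (Hsi1 : s (i-1)%nat < s i).
    { pose proof (Hsinc (i-1)%nat ltac:(lia)). replace (S (i-1)) with i in * by lia. lra. }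
    destruct (classic (exists w, In w X /\ conn (s i) X x w /\ ~ conn (s (i-1)%nat) X x w))
      as [[w [Hw [Hc1 Hc2]]] | Hne].
    + apply Hc2. apply HL; [lia|auto|].
      eapply conn_mono; [|exact Hle].
      apply Hce; [now right|].
      eapply conn_mono; [|exact Ht'].
      apply P1; [now right|].
      eapply conn_sub; eauto.
    + apply Hmax. exists (s (i-1)%nat), (s j).
      split. apply Hpcn; exists (i-1)%nat; split; [lia|auto].
      split. apply Hpcn; exists j; split; [lia|auto].
      split. lra. split. lra. split.
      { intro E; injection E; lra. }
      intros w Hw. split; intro Hc.
      * eapply conn_mono; [exact Hc|]. lra.
      * apply NNPP; intro Hn. apply Hne. exists w; split; auto. split; auto.
        apply HceX; auto.
  - intros Hjk'. apply Rnot_le_lt; intro Hle.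
    assert (Hsj1 : s j < s (S j)) by (apply Hsinc; lia).
    destruct (classic (exists w, In w X /\ conn (s (S j)) X x w /\ ~ conn (s j) X x w))
      as [[w [Hw [Hc1 Hc2]]] | Hne].
    + apply Hc2. apply HceX; auto. apply HL; [lia|auto|].
      eapply conn_mono; [|exact Hs'].
      apply Hce; [now right|].
      eapply conn_mono; [|exact Hle].
      eapply conn_sub; eauto.
    + apply Hmax. exists (s i), (s (S j)).
      split. apply Hpcn; exists i; split; [lia|auto].
      split. apply Hpcn; exists (S j); split; [lia|auto].
      split. lra. split. lra. split.
      { intro E; injection E; lra. }
      intros w Hw. split; intro Hc.
      * eapply conn_mono; [exact Hc|]. lra.
      * apply NNPP; intro Hn. apply Hne. exists w; split; auto. split; auto.
        intro Hc'. apply Hn. apply HceX; auto.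
Qed.
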